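(* Let $M$ be a score distribution model in which a route can only distribute non-negative scores, i.e. $w_M(j,k)\ge 0$ for all $j,k$. Then for every road segment $s$ we have $s.\mathit{lb} \le s.\mathit{min}$ and $s.\mathit{ub} \ge s.\mathit{max}$, where $s.\mathit{min}=\min_{p\in s}\mathit{score}_M(p)$ and $s.\mathit{max}=\max_{p\in s}\mathit{score}_M(p)$.
   Context: A road network is a directed graph $G=(V,E)$ embedded in the plane: each vertex $v$ has a location $\mathit{loc}(v)\in\mathbb{R}^2$, and each edge $e=(v_i,v_j)$ has length $\|e\|$ equal to the Euclidean distance between $\mathit{loc}(v_i)$ and $\mathit{loc}(v_j)$. A network point is a pair $p=(\mathit{eid},d)$ where $\mathit{eid}$ identifies an edge $e=(v_i,v_j)$ and $d\in[0,1]$ is the ratio of the distance from $v_i$ to the point to $\|e\|$; $P$ denotes the set of all network points (so $V\subseteq P$). A road segment is a sequence $s=\langle p_1,\dots,p_n\rangle$, $n\ge 2$, with $p_1,p_n\in P$, $p_2,\dots,p_{n-1}\in V$, $p_1,p_2$ on the same edge, $p_{n-1},p_n$ on the same edge, and $(p_i,p_{i+1})\in E$ for $1<i<n-1$; a segment is identified with the set of network points it passes through. A facility $f$ is located at a network point $f.p$; $F$ is the set of facilities. A route usage object is $\mathit{ro}=(\mathit{rid},r,\mathit{count},\langle \mathit{usage}_1,\dots,\mathit{usage}_{\mathit{count}}\rangle)$ whose route $r$ is a road segment; $R$ is the set of route usage objects. A route $r$ covers a segment $s'$ if every point of $s'$ lies on $r$, and intersects $s'$ if some point of $s'$ lies on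 $r$. $s'.C$ (resp. $s'.I$) is the set of route usage objects whose routes cover (resp. intersect) $s'$; $s'.C\subseteq s'.I$. For a fixed threshold $\delta>0$, a facility $f$ attracts a route $r$ if the shortest network distance from $f.p$ to $r$ is at most $\delta$. Each route $r$ is assigned a score $\mathit{score}(r)\ge 0$ (e.g. $\mathit{score}(r)=\mathrm{length}(r)\sum_i \mathit{usage}_i$). A score distribution model $M$ distributes $\mathit{score}(r)$ over the subsegments of $r$: the facilities attracting $r$ partition $r$ into $k$ consecutive subsegments, and the $j$-th subsegment ($1\le j\le k$) receives $w_M(j,k)\cdot\mathit{score}(r)$. The score $\mathit{score}_M(p)$ of a network point $p$ is the sum, over all route usage objects whose route contains $p$, of the amount assigned by $M$ to the subsegment of that route containing $p$. For a segment $s$ and a route $r_i$ intersecting $s$, let $w_M(j_i,k_i)$ be the fraction of $\mathit{score}(r_i)$ assigned by $M$ to the $j_i$-th subsegment of $r_i$ (out of $k_i$) in which $s$ lies. The lower and upper bound scores of $s$ are $s.\mathit{lb}=\sum_{r_i\in s.C} w_M(j_i,k_i)\,\mathit{score}(r_i)$ and $s.\mathit{ub}=\sum_{r_i\in s.I} w_M(j_i,k_i)\,\mathit{score}(r_i)$; when facilities lie on $s$ so that $s$ meets several subsegments of a route, the lower bound uses the smallest and the upper bound the largest of the corresponding assigned values. *)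

(* Defs.v *)
From mathcomp Require Import all_boot all_order all_algebra.
From mathcomp Require Import all_classical all_reals.
Set Implicit Arguments. Unset Strict Implicit. Unset Printing Implicit Defensive.
Import Order.TTheory GRing.Theory Num.Theory.
Local Open Scope classical_set_scope.
Local Open Scope ring_scope.

(* Abstract rendering of the setting:
   - [P] is the type of network points of the road network;
   - a road segment (in particular a route) is identified with the set of
     network points it passes through, i.e. a [set P];
   - a route usage object carries its route, its score [score(r)], the number
     [k] of consecutive subsegments into which the facilities attracting the
     route partition it, and, for every point of the route, the index
     [j] (1 <= j <= k) of the subsegment containing that point. *)
Record route_usage (R : realType) (P : Type) := RouteUsage {
  ro_route : set P;
  ro_score : R;
  ro_k : nat;
  ro_sub : P -> nat
}.

Definition wf_route_usage (R : realType) (P : Type) (ro : route_usage R P) :=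
  [/\ 0 <= ro_score ro, (0 < ro_k ro)%N &
      forall p, ro_route ro p -> (1 <= ro_sub ro p <= ro_k ro)%N].

Definition covers (R : realType) (P : Type) (ro : route_usage R P) (s : set P) :=
  s `<=` ro_route ro.
Definition intersects (R : realType) (P : Type) (ro : route_usage R P) (s : set P) :=
  exists p, s p /\ ro_route ro p.

Definition assigned (R : realType) (P : Type) (w : nat -> nat -> R)
  (ro : route_usage R P) (p : P) : R :=
  w (ro_sub ro p) (ro_k ro) * ro_score ro.

Definition point_score (R : realType) (P : Type) (w : nat -> nat -> R)
  (Rs : seq (route_usage R P)) (p : P) : R :=
  \sum_(ro <- Rs | `[< ro_route ro p >]) assigned w ro p.

Definition seg_values (R : realType) (P : Type) (w : nat -> nat -> R)
  (ro : route_usage R P) (s : set P) : set R :=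
  [set assigned w ro p | p in s `&` ro_route ro].

(* s.lb and s.ub (smallest / largest assigned value among the subsegments
   of the route met by s; this is a finite set) *)
Definition seg_lb (R : realType) (P : Type) (w : nat -> nat -> R)
  (Rs : seq (route_usage R P)) (s : set P) : R :=
  \sum_(ro <- Rs | `[< covers ro s >]) inf (seg_values w ro s).
Definition seg_ub (R : realType) (P : Type) (w : nat -> nat -> R)
  (Rs : seq (route_usage R P)) (s : set P) : R :=
  \sum_(ro <- Rs | `[< intersects ro s >]) sup (seg_values w ro s).

(* s.min and s.max: min / max of score_M(p) over p in s (the set of values
   is finite, so these are the inf / sup of that set) *)
Definition seg_min (R : realType) (P : Type) (w : nat -> nat -> R)
  (Rs : seq (route_usage R P)) (s : set P) : R :=
  inf [set point_score w Rs p | p in s].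
Definition seg_max (R : realType) (P : Type) (w : nat -> nat -> R)
  (Rs : seq (route_usage R P)) (s : set P) : R :=
  sup [set point_score w Rs p | p in s].

(* Main.v *)
Require Import Defs.
From mathcomp Require Import all_boot all_order all_algebra.
From mathcomp Require Import all_classical all_reals.
From Stdlib Require List.
From mathcomp Require Import lra.
Import Order.TTheory GRing.Theory Num.Theory.
Local Open Scope classical_set_scope.
Local Open Scope ring_scope.

Lemma sum_le_gen (R : realType) (T : Type) (Rs : seq T) (P1 P2 : pred T)
  (f g : T -> R) :
  (forall ro, List.In ro Rs ->
     (if P1 ro then f ro else 0) <= (if P2 ro then g ro else 0)) ->
  \sum_(ro <- Rs | P1 ro) f ro <= \sum_(ro <- Rs | P2 ro) g ro.
Proof.
elim: Rs => [|a l IH] H; first by rewrite !big_nil.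
rewrite !big_cons.
have Ha := H a (or_introl erefl).
have Hl : \sum_(ro <- l | P1 ro) f ro <= \sum_(ro <- l | P2 ro) g ro.
  by apply: IH => ro Hro; apply: H; right.
by case: (P1 a) Ha; case: (P2 a) => Ha; rewrite ?add0r; lra.

Qed.

Theorem lemma2 (R : realType) (P : Type) (w : nat -> nat -> R)
  (Rs : seq (route_usage R P)) (s : set P) :
  (forall j k, 0 <= w j k) ->
  (forall ro, List.In ro Rs -> wf_route_usage ro) ->
  s !=set0 ->
  seg_lb w Rs s <= seg_min w Rs s /\ seg_max w Rs s <= seg_ub w Rs s.
Proof.
move=> w0 wf sne.
have ass0 : forall ro p, List.In ro Rs -> 0 <= assigned w ro p.
  move=> ro p /wf [sc0 _ _]; rewrite /assigned; exact: mulr_ge0.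
have lbv : forall ro, List.In ro Rs -> lbound (seg_values w ro s) 0.
  by move=> ro Hro x [p _ <-]; apply: ass0.
have ubv : forall ro, List.In ro Rs ->
    ubound (seg_values w ro s) (\sum_(j < (ro_k ro).+1) w j (ro_k ro) * ro_score ro).
  move=> ro Hro x [p [sp rp] <-]; rewrite /assigned.
  have [sc0 _ Hk] := wf ro Hro.
  have /andP[_ hk] := Hk p rp.
  have hj : (ro_sub ro p < (ro_k ro).+1)%N by rewrite ltnS.
  rewrite (bigD1 (Ordinal hj)) //= lerDl.
  by apply: sumr_ge0 => i _; apply: mulr_ge0.
split.
- apply: lb_le_inf.
    by case: sne => p sp; exists (point_score w Rs p); exists p.
  move=> x [p sp <-]; rewrite /seg_lb /point_score.
  apply: sum_le_gen => ro Hro.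
  case: asboolP => cov.
    have rp : ro_route ro p by apply: cov.
    have -> : `[< ro_route ro p >] = true by apply/asboolP.
    apply: ge_inf; first by exists 0; apply: lbv.
    by exists p.
  by case: ifP => // _; apply: ass0.
- apply: ge_sup.
    by case: sne => p sp; exists (point_score w Rs p); exists p.
  move=> x [p sp <-]; rewrite /seg_ub /point_score.
  apply: sum_le_gen => ro Hro.
  case: asboolP => rp.
    have -> : `[< intersects ro s >] = true by apply/asboolP; exists p.
    apply: sup_upper_bound; last by exists p.
    split; first by exists (assigned w ro p); exists p.
    by eexists; apply: ubv.
  case: asboolP => // -[q [sq rq]].
  apply: (le_trans (ass0 ro q Hro)).
  apply: sup_upper_bound; last by exists q.
  split; first by exists (assigned w ro q); exists q.
  by eexists; apply: ubv.
Qed.
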